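(* Let $m,n\geq 2$. Each of the following six functions is not Banach-Mazur computable: (I) $g_{\text{inv}}:\mathbb{C}^{m\times n}\to\mathbb{C}^{n\times m}$, $g_{\text{inv}}(A)=A^\dagger$; (II) $g_{\text{norm}}:\mathbb{C}^{m\times n}\to\mathbb{R}$, $g_{\text{norm}}(A)=\|A^\dagger\|_F$; (III) $\Psi_{\text{lsq}}:\mathbb{C}^{m\times n}\times\mathbb{C}^m\to\mathbb{R}$, $\Psi_{\text{lsq}}(A,b)=\min_{x\in\mathbb{C}^n}\|Ax-b\|_2$; (IV) $\Psi_{\text{sol}}:\mathbb{C}^{m\times n}\times\mathbb{C}^m\to\mathbb{C}^n$, $\Psi_{\text{sol}}(A,b)=\hat{x}_{(A,b)}$; (V) $\Psi_{\text{norm}}:\mathbb{C}^{m\times n}\times\mathbb{C}^m\to\mathbb{R}$, $\Psi_{\text{norm}}(A,b)=\|\hat{x}_{(A,b)}\|_2=\|A^\dagger b\|_2$; (VI) $\kappa:\mathbb{C}^{m\times n}\to\mathbb{R}$, $\kappa(A)=\|A\|_F\,\|A^\dagger\|_F$.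
   Context: For $A\in\mathbb{C}^{m\times n}$, $A^\dagger\in\mathbb{C}^{n\times m}$ denotes the Moore–Penrose pseudoinverse, the unique matrix with $AA^\dagger A=A$, $A^\dagger AA^\dagger=A^\dagger$, $(AA^\dagger)^H=AA^\dagger$, $(A^\dagger A)^H=A^\dagger A$. For $b\in\mathbb{C}^m$, $\hat{x}_{(A,b)}=A^\dagger b$ is the minimizer of $\|Ax-b\|_2$ over $x\in\mathbb{C}^n$ with minimal Euclidean norm. $\|\cdot\|_F$ is the Frobenius norm, $\|\cdot\|_2$ the Euclidean norm. Computability notions: a sequence $(r_k)_{k\in\mathbb{N}}\subset\mathbb{Q}$ is computable if $r_k=(-1)^{s(k)}a(k)/b(k)$ for recursive functions $a,b,s:\mathbb{N}\to\mathbb{N}$ with $b(k)\neq 0$ (analogously for multi-indexed sequences). A real number $x$ is computable if there is a computable sequence of rationals $(r_k)$ with $|r_k-x|\le 2^{-k}$ for all $k$; $\mathbb{R}_c$ denotes the computable reals. A sequence $(x_n)_{n}\subset\mathbb{R}$ is computable if there is a computable double sequence $(r_{n,k})\subset\mathbb{Q}$ with $|r_{n,k}-x_n|\le 2^{-k}$ for all $n,k$. Complex numbers, vectors, matrices (and sequences of these) are computable if all real and imaginary parts of all entries are computable (as sequences). A function $f$ defined on computable inputs (real/complex vectors, matrices, or matrix–vector pairs with computable entries) is Banach-Mazur computable if it maps every computable sequence of inputs in its domain to a computable sequence of outputs; for complex-valued functions this is required of the real and imaginary parts. *)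

(* Defs.v *)
From HB Require Import structures.
From mathcomp Require Import all_boot all_order all_algebra.
From mathcomp Require Import complex spectral.
From mathcomp Require Import boolp classical_sets reals.
Set Implicit Arguments. Unset Strict Implicit. Unset Printing Implicit Defensive.
Import Order.TTheory GRing.Theory Num.Theory.
Local Open Scope ring_scope.

Inductive rcode : Type :=
| rZero : rcode
| rSucc : rcode
| rProj : nat -> rcode
| rComp : rcode -> list rcode -> rcode
| rPrec : rcode -> rcode -> rcode        (* primitive recursion on 1st arg *)
| rMin  : rcode -> rcode.

Inductive reval : rcode -> list nat -> nat -> Prop :=
| reZero xs : reval rZero xs 0
| reSucc x xs : reval rSucc (x :: xs) x.+1
| reProj i xs y : onth xs i = Some y -> reval (rProj i) xs y
| reComp f gs xs ys y :
    revals gs xs ys -> reval f ys y -> reval (rComp f gs) xs y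
| rePrec0 f g xs y : reval f xs y -> reval (rPrec f g) (0%N :: xs) y
| rePrecS f g k xs r y :
    reval (rPrec f g) (k :: xs) r -> reval g (k :: r :: xs) y ->
    reval (rPrec f g) (k.+1 :: xs) y
| reMin f xs y :
    reval f (y :: xs) 0 ->
    (forall z, (z < y)%N -> exists v, reval f (z :: xs) v.+1) ->
    reval (rMin f) xs y
with revals : list rcode -> list nat -> list nat -> Prop :=
| resNil xs : revals nil xs nil
| resCons g gs xs y ys :
    reval g xs y -> revals gs xs ys -> revals (g :: gs) xs (y :: ys).

Definition recursive2 (f : nat -> nat -> nat) : Prop :=
  exists c : rcode, forall n k : nat, reval c [:: n; k] (f n k).

Section Computability.
Variable R : realType.

Definition rat_of (s a b : nat) : R := (-1) ^+ s * (a%:R / b%:R).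

Definition computable_seqR (x : nat -> R) : Prop :=
  exists a b s : nat -> nat -> nat,
    [/\ recursive2 a, recursive2 b, recursive2 s,
        (forall n k, b n k <> 0%N) &
        (forall n k, `|rat_of (s n k) (a n k) (b n k) - x n| <= (2%:R ^+ k)^-1)].

Definition computable_seqC (z : nat -> R[i]) : Prop :=
  computable_seqR (fun n => complex.Re (z n)) /\
  computable_seqR (fun n => complex.Im (z n)).

(* sequences of complex p x q matrices (vectors are p x 1 matrices) *)
Definition computable_seqM (p q : nat) (A : nat -> 'M[R[i]]_(p, q)) : Prop :=
  forall (i : 'I_p) (j : 'I_q), computable_seqC (fun n => A n i j).

Definition computable_seqMV (p q : nat)
    (u : nat -> 'M[R[i]]_(p, q) * 'cV[R[i]]_p) : Prop :=
  computable_seqM (fun n => (u n).1) /\ computable_seqM (fun n => (u n).2).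

Definition BM_computable (A B : Type) (cin : (nat -> A) -> Prop)
    (cout : (nat -> B) -> Prop) (f : A -> B) : Prop :=
  forall u : nat -> A, cin u -> cout (fun n => f (u n)).

Definition cabs2 (z : R[i]) : R := complex.Re z ^+ 2 + complex.Im z ^+ 2.

(* Frobenius norm; for p x 1 matrices this is the Euclidean norm *)
Definition frob (p q : nat) (A : 'M[R[i]]_(p, q)) : R :=
  Num.sqrt (\sum_(i < p) \sum_(j < q) cabs2 (A i j)).

Definition norm2 (p : nat) (v : 'cV[R[i]]_p) : R := frob v.

Local Open Scope sesquilinear_scope.

Definition is_pinv (p q : nat) (A : 'M[R[i]]_(p, q)) (X : 'M[R[i]]_(q, p)) :=
  [/\ A *m X *m A = A, X *m A *m X = X,
      (A *m X) ^t* = A *m X & (X *m A) ^t* = X *m A].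

(* the Moore-Penrose pseudoinverse: the unique X with is_pinv A X *)
Definition pinv (p q : nat) (A : 'M[R[i]]_(p, q)) : 'M[R[i]]_(q, p) :=
  xget 0 [set X | is_pinv A X].

(* min_x || A x - b ||_2 (the infimum is attained) *)
Definition lsq_res (p q : nat) (A : 'M[R[i]]_(p, q)) (b : 'cV[R[i]]_p) : R :=
  inf [set norm2 (A *m x - b) | x in [set: 'cV[R[i]]_q]].

(* the minimal-norm least squares solution A^dagger b *)
Definition lsq_sol (p q : nat) (A : 'M[R[i]]_(p, q)) (b : 'cV[R[i]]_p)
  : 'cV[R[i]]_q := pinv A *m b.

End Computability.

(* Main.v *)
Require Import Defs.
From HB Require Import structures.
From mathcomp Require Import all_boot all_order all_algebra.
From mathcomp Require Import complex spectral.
From mathcomp Require Import boolp classical_sets reals.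
Local Open Scope ring_scope.
From mathcomp Require Import ring lra.
From Stdlib Require Import Lia.
Set Implicit Arguments. Unset Strict Implicit. Unset Printing Implicit Defensive.
Local Open Scope nat_scope.

Ltac nlia := intros;
  repeat match goal with
  | H : is_true (leq _ _) |- _ => move/leP: H => H
  | H : is_true (_ == _) |- _ => move/eqP: H => H
  | H : is_true (~~ (_ == _)) |- _ => move/eqP: H => H
  | H : is_true (_ && _) |- _ => case/andP: H => ? ?
  | |- is_true (leq _ _) => apply/leP
  | |- is_true (_ == _) => apply/eqP
  | |- is_true (_ && _) => apply/andP; split
  end;
  unfold addn, subn, muln, predn in *; lia.

(* total evaluation of mu-free codes *)
Fixpoint pe (c : rcode) (xs : seq nat) {struct c} : nat :=
  match c with
  | rZero => 0
  | rSucc => (head 0 xs).+1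
  | rProj i => nth 0 xs i
  | rComp f gs => pe f ((fix pes (gs : list rcode) : seq nat :=
                          match gs with nil => nil | g :: gs' => pe g xs :: pes gs' end) gs)
  | rPrec f g => match xs with
                 | nil => 0
                 | k :: ys => nat_rect (fun _ => nat) (pe f ys) (fun i r => pe g (i :: r :: ys)) k
                 end
  | rMin _ => 0
  end.

Fixpoint wf (c : rcode) (n : nat) {struct c} : bool :=
  match c with
  | rZero => true
  | rSucc => (0 < n)%N
  | rProj i => (i < n)%N
  | rComp f gs => wf f (size gs) &&
      (fix wfs (gs : list rcode) : bool :=
         match gs with nil => true | g :: gs' => wf g n && wfs gs' end) gs
  | rPrec f g => [&& (0 < n)%N, wf f n.-1 & wf g n.+1]
  | rMin _ => false
  end.

Lemma onth_nth (xs : seq nat) i : (i < size xs)%N -> onth xs i = Some (nth 0 xs i).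
Proof. by elim: xs i => [|x xs IH] [|i] //= /IH. Qed.

Lemma pe_comp f gs xs : pe (rComp f gs) xs = pe f (map (fun g => pe g xs) gs).
Proof. by rewrite /=; congr pe; elim: gs => //= g gs ->. Qed.

Lemma wf_comp f gs n : wf (rComp f gs) n = wf f (size gs) && all (fun g => wf g n) gs.
Proof. by rewrite /=; congr andb; elim: gs => //= g gs ->. Qed.

Fixpoint pe_sound (c : rcode) : forall xs, wf c (size xs) -> reval c xs (pe c xs).
Proof.
case: c => [||i|f gs|f g|f] xs.
- by move=> _; constructor.
- by case: xs => // x xs _; constructor.
- by move=> /= H; constructor; apply: onth_nth.
- rewrite wf_comp pe_comp => /andP[Hf Hgs]; econstructor; last first.
    by apply: pe_sound; rewrite size_map.
  elim: gs Hgs {Hf} => [|g gs IH] /=; first by constructor.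
  by case/andP=> Hg Hgs; constructor; [apply: pe_sound | apply: IH].
- case: xs => [|k ys] //= /andP[Hf Hg].
  elim: k => [|k IH] /=; first by constructor; apply: pe_sound.
  by econstructor; [exact: IH | apply: pe_sound].
- by [].
Qed.

Inductive exp : Type :=
| EVar of nat | EZero | ESucc of exp | EPred of exp
| EAdd of exp & exp | ESub of exp & exp | EMul of exp & exp
| EIfz of exp & exp & exp
| ERec of exp & exp & exp
| ELet of exp & exp
| EPair of exp & exp | EFst of exp | ESnd of exp.

Fixpoint tri k := if k is k'.+1 then tri k' + k'.+1 else 0.
Fixpoint cdiag z := if z is z'.+1 then
   (if tri (cdiag z').+1 - z'.+1 is 0 then (cdiag z').+1 else cdiag z') else 0.
Definition cpair x y := tri (x + y) + y.
Definition csnd z := z - tri (cdiag z).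
Definition cfst z := cdiag z - csnd z.
Arguments tri : simpl never.
Arguments cdiag : simpl never.
Arguments cpair : simpl never.
Arguments cfst : simpl never.
Arguments csnd : simpl never.

Lemma triS k : tri k.+1 = tri k + k.+1. Proof. by []. Qed.

Lemma tri_mono a b : (a < b)%N -> (tri a.+1 <= tri b)%N.
Proof.
elim: b => // b IH; rewrite ltnS leq_eqVlt => /orP[/eqP->|/IH h]; first by [].
rewrite [tri b.+1]triS; nlia.
Qed.

Lemma tri_lt a b : (a < b)%N -> (tri a < tri b)%N.
Proof. move=> /tri_mono; rewrite [tri a.+1]triS; nlia. Qed.

Lemma cdiag_spec z : (tri (cdiag z) <= z < tri (cdiag z).+1)%N.
Proof.
elim: z => [|z IH] //.
rewrite [cdiag z.+1]/cdiag -/cdiag.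
case E: (tri (cdiag z).+1 - z.+1) => [|v].
  move: E IH; rewrite !triS; nlia.
move: E IH; rewrite !triS; nlia.
Qed.

Lemma cdiag_uniq d z : (tri d <= z < tri d.+1)%N -> cdiag z = d.
Proof.
move=> /andP[h1 h2]; have /andP[h3 h4] := cdiag_spec z.
case: (ltngtP (cdiag z) d) => // h.
  have := tri_mono h; nlia.
have := tri_mono h; nlia.
Qed.

Lemma cdiag_pair x y : cdiag (cpair x y) = x + y.
Proof. apply: cdiag_uniq; rewrite /cpair triS; nlia. Qed.

Lemma csnd_pair x y : csnd (cpair x y) = y.
Proof. rewrite /csnd cdiag_pair /cpair; nlia. Qed.

Lemma cfst_pair x y : cfst (cpair x y) = x.
Proof. rewrite /cfst csnd_pair cdiag_pair; nlia. Qed.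

Lemma cfst0 : cfst 0 = 0. Proof. by []. Qed.
Lemma csnd0 : csnd 0 = 0. Proof. by []. Qed.

Fixpoint ev (e : exp) (env : seq nat) {struct e} : nat :=
 match e with
 | EVar i => nth 0 env i
 | EZero => 0
 | ESucc a => (ev a env).+1
 | EPred a => (ev a env).-1
 | EAdd a b => ev a env + ev b env
 | ESub a b => ev a env - ev b env
 | EMul a b => ev a env * ev b env
 | EIfz c a b => if ev c env is 0 then ev a env else ev b env
 | ERec e0 e1 ek => nat_rect (fun _ => nat) (ev e0 env) (fun i r => ev e1 (i :: r :: env)) (ev ek env)
 | ELet a b => ev b (ev a env :: env)
 | EPair a b => cpair (ev a env) (ev b env)
 | EFst a => cfst (ev a env)
 | ESnd a => csnd (ev a env)
 end.

Definition tri_body := ERec EZero (EAdd (EVar 1) (ESucc (EVar 0))) (EVar 0).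
Definition diag_body := ERec EZero
  (EIfz (ESub (ELet (ESucc (EVar 1)) tri_body) (ESucc (EVar 0))) (ESucc (EVar 1)) (EVar 1)) (EVar 0).
Definition snd_body := ESub (EVar 0) (ELet diag_body tri_body).
Definition fst_body := ESub diag_body snd_body.

Fixpoint good (e : exp) (N : nat) {struct e} : bool :=
 match e with
 | EVar i => (i < N)%N
 | EZero => true
 | ESucc a | EPred a => good a N
 | EAdd a b | ESub a b | EMul a b => good a N && good b N
 | EIfz c a b => [&& good c N, good a N & good b N]
 | ERec e0 e1 ek => [&& good e0 N, good e1 N.+2 & good ek N]
 | ELet a b => good a N && good b N.+1
 | _ => false
 end.

Lemma good_bodies N : [&& good tri_body N.+1, good diag_body N.+1, good snd_body N.+1 & good fst_body N.+1].
Proof. by []. Qed.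

Lemma ev_tri v env : ev tri_body (v :: env) = tri v.
Proof. by elim: v => //= v ->; rewrite triS. Qed.
Opaque tri_body.

Lemma ev_diag v env : ev diag_body (v :: env) = cdiag v.
Proof.
elim: v => //= v IH; rewrite ev_tri IH //.
Qed.
Opaque diag_body.

Lemma ev_snd v env : ev snd_body (v :: env) = csnd v.
Proof.
change (ev snd_body (v::env)) with (v - ev tri_body (ev diag_body (v::env) :: v :: env)).
by rewrite ev_tri ev_diag. Qed.
Opaque snd_body.

Lemma ev_fst v env : ev fst_body (v :: env) = cfst (v).
Proof.
change (ev fst_body (v::env)) with (ev diag_body (v::env) - ev snd_body (v::env)).
by rewrite ev_diag ev_snd. Qed.
Opaque fst_body.

Fixpoint ds (e : exp) : exp :=
 match e with
 | EVar i => EVar i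
 | EZero => EZero
 | ESucc a => ESucc (ds a)
 | EPred a => EPred (ds a)
 | EAdd a b => EAdd (ds a) (ds b)
 | ESub a b => ESub (ds a) (ds b)
 | EMul a b => EMul (ds a) (ds b)
 | EIfz c a b => EIfz (ds c) (ds a) (ds b)
 | ERec e0 e1 ek => ERec (ds e0) (ds e1) (ds ek)
 | ELet a b => ELet (ds a) (ds b)
 | EPair a b => EAdd (ELet (EAdd (ds a) (ds b)) tri_body) (ds b)
 | EFst a => ELet (ds a) fst_body
 | ESnd a => ELet (ds a) snd_body
 end.

Lemma ev_ds e env : ev (ds e) env = ev e env.
Proof.
elim: e env => //=.
- by move=> a IH env; rewrite IH.
- by move=> a IH env; rewrite IH.
- by move=> a IHa b IHb env; rewrite IHa IHb.
- by move=> a IHa b IHb env; rewrite IHa IHb.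
- by move=> a IHa b IHb env; rewrite IHa IHb.
- by move=> c IHc a IHa b IHb env; rewrite IHc IHa IHb.
- move=> a IHa b IHb c IHc env; rewrite IHa IHc.
  by elim: (ev c env) => //= n ->; rewrite IHb.
- by move=> a IHa b IHb env; rewrite IHa IHb.
- by move=> a IHa b IHb env; rewrite ev_tri IHa IHb.
- by move=> a IHa env; rewrite ev_fst IHa.
- by move=> a IHa env; rewrite ev_snd IHa.
Qed.

Definition PRED := rPrec rZero (rProj 0).
Definition ADD := rPrec (rProj 0) (rComp rSucc [:: rProj 1]).
Definition SUB' := rPrec (rProj 0) (rComp PRED [:: rProj 1]).
Definition SUB := rComp SUB' [:: rProj 1; rProj 0].
Definition MUL := rPrec rZero (rComp ADD [:: rProj 1; rProj 2]).
Definition IFZ := rPrec (rProj 0) (rProj 3).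

Lemma pe_PRED x : pe PRED [:: x] = x.-1. Proof. by case: x. Qed.
Opaque PRED.
Lemma pe_ADD x y : pe ADD [:: x; y] = x + y.
Proof. by elim: x => //= x IH; rewrite IH. Qed.
Opaque ADD.
Lemma pe_SUB x y : pe SUB [:: x; y] = x - y.
Proof. rewrite /SUB /=; elim: y => [|y IH] /=; first by rewrite subn0.
by rewrite pe_PRED IH subnS. Qed.
Lemma pe_MUL x y : pe MUL [:: x; y] = x * y.
Proof. elim: x => //= x IH; rewrite pe_ADD IH; by rewrite mulSn addnC. Qed.
Lemma pe_IFZ c a b : pe IFZ [:: c; a; b] = if c is 0 then a else b.
Proof. by case: c. Qed.

Opaque SUB MUL IFZ.
Definition projs N := map rProj (iota 0 N).

Fixpoint comp (N : nat) (e : exp) {struct e} : rcode :=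
 match e with
 | EVar i => rProj i
 | EZero => rZero
 | ESucc a => rComp rSucc [:: comp N a]
 | EPred a => rComp PRED [:: comp N a]
 | EAdd a b => rComp ADD [:: comp N a; comp N b]
 | ESub a b => rComp SUB [:: comp N a; comp N b]
 | EMul a b => rComp MUL [:: comp N a; comp N b]
 | EIfz c a b => rComp IFZ [:: comp N c; comp N a; comp N b]
 | ERec e0 e1 ek => rComp (rPrec (comp N e0) (comp N.+2 e1)) (comp N ek :: projs N)
 | ELet a b => rComp (comp N.+1 b) (comp N a :: projs N)
 | _ => rZero
 end.

Fixpoint bnd (e : exp) (N : nat) {struct e} : bool :=
 match e with
 | EVar i => (i < N)%N
 | EZero => true
 | ESucc a | EPred a | EFst a | ESnd a => bnd a N
 | EAdd a b | ESub a b | EMul a b | EPair a b => bnd a N && bnd b N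
 | EIfz c a b => [&& bnd c N, bnd a N & bnd b N]
 | ERec e0 e1 ek => [&& bnd e0 N, bnd e1 N.+2 & bnd ek N]
 | ELet a b => bnd a N && bnd b N.+1
 end.


Lemma good_ds e N : bnd e N -> good (ds e) N.
Proof.
elim: e N => //=.
- by move=> a IHa b IHb N /andP[/IHa -> /IHb ->].
- by move=> a IHa b IHb N /andP[/IHa -> /IHb ->].
- by move=> a IHa b IHb N /andP[/IHa -> /IHb ->].
- by move=> c IHc a IHa b IHb N /and3P[/IHc -> /IHa -> /IHb ->].
- by move=> a IHa b IHb c IHc N /and3P[/IHa -> /IHb -> /IHc ->].
- by move=> a IHa b IHb N /andP[/IHa -> /IHb ->].
- by move=> a IHa b IHb N /andP[/IHa -> /IHb ->]; case/and4P: (good_bodies N).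
- by move=> a IHa N /IHa ->; case/and4P: (good_bodies N).
- by move=> a IHa N /IHa ->; case/and4P: (good_bodies N).
Qed.

Lemma pe_projs env : map (fun g => pe g env) (projs (size env)) = env.
Proof. by rewrite /projs -map_comp /=; apply: (mkseq_nth 0). Qed.

Lemma wf_projs N : all (fun g => wf g N) (projs N).
Proof. by rewrite /projs all_map; apply/allP => x; rewrite mem_iota /=. Qed.

Lemma wfs_all gs n : (fix wfs (gs : seq rcode) : bool :=
         match gs with
         | [::] => true
         | g :: gs' => wf g n && wfs gs'
         end) gs = all (fun g => wf g n) gs.
Proof. by elim: gs => //= g gs ->. Qed.

Lemma comp_wf e N : good e N -> wf (comp N e) N.
Proof.
elim: e N => //=.
- by move=> a IHa N /IHa ->.
- by move=> a IHa N /IHa ->.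
- by move=> a IHa b IHb N /andP[/IHa -> /IHb ->].
- by move=> a IHa b IHb N /andP[/IHa -> /IHb ->].
- by move=> a IHa b IHb N /andP[/IHa -> /IHb ->].
- by move=> c IHc a IHa b IHb N /and3P[/IHc -> /IHa -> /IHb ->].
- move=> a IHa b IHb c IHc N /and3P[ga gb gc].
  by rewrite /projs size_map size_iota (IHa _ ga) (IHb _ gb) (IHc _ gc) wfs_all -/(projs N) wf_projs.
- move=> a IHa b IHb N /andP[ga gb].
  by rewrite /projs size_map size_iota (IHa _ ga) (IHb _ gb) wfs_all -/(projs N) wf_projs.
Qed.

Lemma pes_map gs env : (fix pes (gs : list rcode) : seq nat :=
     match gs with nil => nil | g :: gs' => pe g env :: pes gs' end) gs = map (fun g => pe g env) gs.
Proof. by elim: gs => //= g gs ->. Qed.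

Lemma comp_pe e N env : good e N -> size env = N -> pe (comp N e) env = ev e env.
Proof.
elim: e N env => //=.
- by move=> a IHa N env ha hs; rewrite IHa.
- by move=> a IHa N env ha hs; rewrite IHa // pe_PRED.
- by move=> a IHa b IHb N env /andP[ha hb] hs; rewrite IHa // IHb // pe_ADD.
- by move=> a IHa b IHb N env /andP[ha hb] hs; rewrite IHa // IHb // pe_SUB.
- by move=> a IHa b IHb N env /andP[ha hb] hs; rewrite IHa // IHb // pe_MUL.
- by move=> c IHc a IHa b IHb N env /and3P[hc ha hb] hs; rewrite IHc // IHa // IHb // pe_IFZ.
- move=> a IHa b IHb c IHc N env /and3P[ha hb hc] hs.
  rewrite pes_map -hs pe_projs hs IHc // IHa //.
  elim: (ev c env) => //= n ->; rewrite IHb //=; by rewrite hs.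
- move=> a IHa b IHb N env /andP[ha hb] hs.
  rewrite pes_map -hs pe_projs hs IHa // IHb //=; by rewrite hs.
Qed.

Lemma exp_reval e N env : bnd e N -> size env = N -> reval (comp N (ds e)) env (ev e env).
Proof.
move=> hb hs; have hg := good_ds hb.
rewrite -ev_ds -(comp_pe hg hs); apply: pe_sound; rewrite hs; exact: comp_wf.
Qed.

(* level-indexed expression builders *)
Definition E := nat -> exp.
Definition vr (l : nat) : E := fun d => EVar (Nat.sub d l.+1).
Definition lt_ (a : E) (b : nat -> E) : E := fun d => ELet (a d) (b d d.+1).
Definition pr (a b : E) : E := fun d => EPair (a d) (b d).
Definition fs (a : E) : E := fun d => EFst (a d).
Definition sn (a : E) : E := fun d => ESnd (a d).
Definition sc (a : E) : E := fun d => ESucc (a d).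
Definition pd (a : E) : E := fun d => EPred (a d).
Definition ad (a b : E) : E := fun d => EAdd (a d) (b d).
Definition sb (a b : E) : E := fun d => ESub (a d) (b d).
Definition ml (a b : E) : E := fun d => EMul (a d) (b d).
Definition ifz (c a b : E) : E := fun d => EIfz (c d) (a d) (b d).
Definition cst (n : nat) : E := fun _ => iter n ESucc EZero.
Definition rec_ (e0 : E) (e1 : nat -> nat -> E) (ek : E) : E :=
  fun d => ERec (e0 d) (e1 d.+1 d d.+2) (ek d).
Fixpoint case_ (x : E) (l : seq E) (dflt : E) : E :=
  match l with
  | [::] => dflt
  | a :: l' => ifz x a (lt_ (pd x) (fun x' => case_ (vr x') l' dflt))
  end.

Definition hd_ (l : E) : E := fs (pd l).
Definition tl_ (l : E) : E := sn (pd l).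
Definition cons_ (h t : E) : E := sc (pr h t).
Definition nth_ (l i : E) : E := hd_ (rec_ l (fun _ acc => tl_ (vr acc)) i).

Definition fEv c xs := pr (cst 0) (pr c xs).
Definition fEvs gs xs := pr (cst 1) (pr gs xs).
Definition fConsG g xs := pr (cst 2) (pr g xs).
Definition fConsV L := pr (cst 3) L.
Definition fCompF f := pr (cst 4) f.
Definition fPrecG g k ys := pr (cst 5) (pr g (pr k ys)).
Definition fMinF f z xs := pr (cst 6) (pr f (pr z xs)).

Definition step_E : E :=
 ifz (fs (vr 0)) (vr 0)
  (lt_ (pd (fs (vr 0))) (fun K' =>
   lt_ (sn (vr 0)) (fun r =>
   lt_ (fs (vr K')) (fun fr =>
   lt_ (sn (vr K')) (fun rest =>
   lt_ (fs (vr fr)) (fun t =>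
   lt_ (sn (vr fr)) (fun p =>
   case_ (vr t) [::
    (* Ev *)
    lt_ (fs (vr p)) (fun c => lt_ (sn (vr p)) (fun xs =>
    lt_ (fs (vr c)) (fun ct => lt_ (sn (vr c)) (fun cp =>
    case_ (vr ct) [::
      pr (vr rest) (cst 0);
      pr (vr rest) (sc (hd_ (vr xs)));
      pr (vr rest) (nth_ (vr xs) (vr cp));
      pr (cons_ (fEvs (sn (vr cp)) (vr xs)) (cons_ (fCompF (fs (vr cp))) (vr rest))) (vr r);
      lt_ (hd_ (vr xs)) (fun k => lt_ (tl_ (vr xs)) (fun ys =>
        ifz (vr k) (pr (cons_ (fEv (fs (vr cp)) (vr ys)) (vr rest)) (vr r))
          (pr (cons_ (fEv (vr c) (cons_ (pd (vr k)) (vr ys)))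
                (cons_ (fPrecG (sn (vr cp)) (pd (vr k)) (vr ys)) (vr rest))) (vr r))));
      pr (cons_ (fEv (vr cp) (cons_ (cst 0) (vr xs))) (cons_ (fMinF (vr cp) (cst 0) (vr xs)) (vr rest))) (vr r)
    ] (vr 0)))));
    (* Evs *)
    lt_ (fs (vr p)) (fun gs => lt_ (sn (vr p)) (fun xs =>
      ifz (vr gs) (pr (vr rest) (cst 0))
        (pr (cons_ (fEvs (tl_ (vr gs)) (vr xs)) (cons_ (fConsG (hd_ (vr gs)) (vr xs)) (vr rest))) (vr r))));
    (* ConsG *)
    lt_ (fs (vr p)) (fun g => lt_ (sn (vr p)) (fun xs =>
      pr (cons_ (fEv (vr g) (vr xs)) (cons_ (fConsV (vr r)) (vr rest))) (vr r)));
    (* ConsV *)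
    pr (vr rest) (cons_ (vr r) (vr p));
    (* CompF *)
    pr (cons_ (fEv (vr p) (vr r)) (vr rest)) (vr r);
    (* PrecG *)
    lt_ (fs (vr p)) (fun g => lt_ (sn (vr p)) (fun q =>
    lt_ (fs (vr q)) (fun k => lt_ (sn (vr q)) (fun ys =>
      pr (cons_ (fEv (vr g) (cons_ (vr k) (cons_ (vr r) (vr ys)))) (vr rest)) (vr r)))));
    (* MinF *)
    lt_ (fs (vr p)) (fun f => lt_ (sn (vr p)) (fun q =>
    lt_ (fs (vr q)) (fun zz => lt_ (sn (vr q)) (fun xs =>
      ifz (vr r) (pr (vr rest) (vr zz))
        (pr (cons_ (fEv (vr f) (cons_ (sc (vr zz)) (vr xs)))
              (cons_ (fMinF (vr f) (sc (vr zz)) (vr xs)) (vr rest))) (vr r))))))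
   ] (vr 0)))))))).

Definition stepf z := ev (step_E 1) [:: z].

Definition ccons h t := (cpair h t).+1.
Fixpoint encl (l : seq nat) : nat := if l is x :: l' then ccons x (encl l') else 0.

Fixpoint enc (c : rcode) : nat :=
  match c with
  | rZero => cpair 0 0
  | rSucc => cpair 1 0
  | rProj i => cpair 2 i
  | rComp f gs => cpair 3 (cpair (enc f) ((fix encs (gs : list rcode) : nat :=
        match gs with nil => 0 | g :: gs' => ccons (enc g) (encs gs') end) gs))
  | rPrec f g => cpair 4 (cpair (enc f) (enc g))
  | rMin f => cpair 5 (enc f)
  end.

Lemma enc_comp f gs : enc (rComp f gs) = cpair 3 (cpair (enc f) (encl (map enc gs))).
Proof. by rewrite /=; congr (cpair _ (cpair _ _)); elim: gs => //= g gs ->. Qed.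

Inductive frame := FEv of nat & nat | FEvs of nat & nat | FConsG of nat & nat
  | FConsV of nat | FCompF of nat | FPrecG of nat & nat & nat | FMinF of nat & nat & nat.

Definition encF (f : frame) : nat :=
  match f with
  | FEv c xs => cpair 0 (cpair c xs)
  | FEvs gs xs => cpair 1 (cpair gs xs)
  | FConsG g xs => cpair 2 (cpair g xs)
  | FConsV L => cpair 3 L
  | FCompF f => cpair 4 f
  | FPrecG g k ys => cpair 5 (cpair g (cpair k ys))
  | FMinF f z xs => cpair 6 (cpair f (cpair z xs))
  end.

Definition encK (K : seq frame) := encl (map encF K).
Definition encC (K : seq frame) (r : nat) := cpair (encK K) r.

Lemma encK_cons f K : encK (f :: K) = ccons (encF f) (encK K). Proof. by []. Qed.

Lemma encl_cons x xs : encl (x :: xs) = ccons x (encl xs). Proof. by []. Qed.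
Lemma enc_zero : enc rZero = cpair 0 0. Proof. by []. Qed.
Lemma enc_succ : enc rSucc = cpair 1 0. Proof. by []. Qed.
Lemma enc_proj i : enc (rProj i) = cpair 2 i. Proof. by []. Qed.
Lemma enc_prec f g : enc (rPrec f g) = cpair 4 (cpair (enc f) (enc g)). Proof. by []. Qed.
Lemma enc_min f : enc (rMin f) = cpair 5 (enc f). Proof. by []. Qed.

Ltac stepsimpl := rewrite /stepf /encC ?encK_cons ?encl_cons ?enc_zero ?enc_succ ?enc_proj ?enc_prec ?enc_min ?enc_comp /ccons;
  cbv beta iota zeta delta [ev step_E ifz lt_ fs vr pd sn case_ pr cst sc hd_ tl_ cons_ nth_ fEv fEvs fConsG fConsV fCompF fPrecG fMinF rec_ Nat.sub nth iter encF];
  repeat progress (rewrite ?cfst_pair ?csnd_pair; cbv beta iota zeta delta [predn Nat.pred]).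

Lemma iter_rect (g : nat -> nat) b i : nat_rect (fun _ => nat) b (fun _ r => g r) i = iter i g b.
Proof. by elim: i => //= i ->. Qed.

Lemma nthl_encl xs i : cfst (nat_rect (fun _ => nat) (encl xs) (fun _ r0 => csnd r0.-1) i).-1 = nth 0 xs i.
Proof.
rewrite iter_rect; elim: i xs => [|i IH] [|x xs].
- by [].
- by rewrite /= /ccons /= cfst_pair.
- have h : forall j, iter j (fun r : nat => csnd r.-1) 0 = 0 by elim=> //= j ->.
  by rewrite h.
- by rewrite iterSr /= /ccons /= csnd_pair IH.
Qed.

Lemma step_zero xs K r : stepf (encC (FEv (enc rZero) xs :: K) r) = encC K 0.
Proof. by stepsimpl. Qed.
Lemma step_succ x xs K r : stepf (encC (FEv (enc rSucc) (encl (x :: xs)) :: K) r) = encC K x.+1.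
Proof. by stepsimpl. Qed.
Lemma step_proj i xs K r : stepf (encC (FEv (enc (rProj i)) (encl xs) :: K) r) = encC K (nth 0 xs i).
Proof. stepsimpl; by rewrite nthl_encl. Qed.
Lemma step_comp f gs xs K r : stepf (encC (FEv (enc (rComp f gs)) xs :: K) r) =
  encC (FEvs (encl (map enc gs)) xs :: FCompF (enc f) :: K) r.
Proof. by stepsimpl. Qed.
Lemma step_prec0 f g ys K r : stepf (encC (FEv (enc (rPrec f g)) (encl (0 :: ys)) :: K) r) =
  encC (FEv (enc f) (encl ys) :: K) r.
Proof. by stepsimpl. Qed.
Lemma step_precS f g k ys K r : stepf (encC (FEv (enc (rPrec f g)) (encl (k.+1 :: ys)) :: K) r) =
  encC (FEv (enc (rPrec f g)) (encl (k :: ys)) :: FPrecG (enc g) k (encl ys) :: K) r.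
Proof. by stepsimpl. Qed.
Lemma step_min f xs K r : stepf (encC (FEv (enc (rMin f)) xs :: K) r) =
  encC (FEv (enc f) (ccons 0 xs) :: FMinF (enc f) 0 xs :: K) r.
Proof. by stepsimpl. Qed.
Lemma step_evs_nil xs K r : stepf (encC (FEvs 0 xs :: K) r) = encC K 0.
Proof. by stepsimpl. Qed.
Lemma step_evs_cons g gs xs K r : stepf (encC (FEvs (ccons g gs) xs :: K) r) =
  encC (FEvs gs xs :: FConsG g xs :: K) r.
Proof. by stepsimpl. Qed.
Lemma step_consg g xs K r : stepf (encC (FConsG g xs :: K) r) = encC (FEv g xs :: FConsV r :: K) r.
Proof. by stepsimpl. Qed.
Lemma step_consv L K r : stepf (encC (FConsV L :: K) r) = encC K (ccons r L).
Proof. by stepsimpl. Qed.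
Lemma step_compf f K r : stepf (encC (FCompF f :: K) r) = encC (FEv f r :: K) r.
Proof. by stepsimpl. Qed.
Lemma step_precg g k ys K r : stepf (encC (FPrecG g k ys :: K) r) = encC (FEv g (ccons k (ccons r ys)) :: K) r.
Proof. by stepsimpl. Qed.
Lemma step_min0 f z xs K : stepf (encC (FMinF f z xs :: K) 0) = encC K z.
Proof. by stepsimpl. Qed.
Lemma step_minS f z xs K v : stepf (encC (FMinF f z xs :: K) v.+1) =
  encC (FEv f (ccons z.+1 xs) :: FMinF f z.+1 xs :: K) v.+1.
Proof. by stepsimpl. Qed.
Lemma step_final z : cfst z = 0 -> stepf z = z.
Proof. move=> h; rewrite /stepf; cbv beta iota zeta delta [ev step_E ifz vr Nat.sub nth fs]; by rewrite h. Qed.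

Definition reach a b := exists n, iter n stepf a = b.

Lemma reach_refl a : reach a a. Proof. by exists 0. Qed.
Lemma reach_step a b : reach (stepf a) b -> reach a b.
Proof. by case=> n h; exists n.+1; rewrite iterSr. Qed.
Lemma reach_trans a b c : reach a b -> reach b c -> reach a c.
Proof. by case=> n h [m h']; exists (m + n); rewrite iterD h. Qed.

Lemma onth_nth' (xs : seq nat) i y : onth xs i = Some y -> nth 0 xs i = y.
Proof. elim: xs i => [|x xs IH] [|i] //=; first by case. exact: IH. Qed.

Lemma encl_map_nil : encl (map enc [::]) = 0. Proof. by []. Qed.

Fixpoint compl c xs y (H : reval c xs y) {struct H} :
  forall K r, reach (encC (FEv (enc c) (encl xs) :: K) r) (encC K y)
with compls gs xs ys (H : revals gs xs ys) {struct H} :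
  forall K r, reach (encC (FEvs (encl (map enc gs)) (encl xs) :: K) r) (encC K (encl ys)).
Proof.
- case: H => {c xs y}.
  + move=> xs K r; apply: reach_step; rewrite step_zero; exact: reach_refl.
  + move=> x xs K r; apply: reach_step; rewrite step_succ; exact: reach_refl.
  + move=> i xs y Hi K r; apply: reach_step; rewrite step_proj (onth_nth' Hi); exact: reach_refl.
  + move=> f gs xs ys y Hgs Hf K r; apply: reach_step; rewrite step_comp.
    apply: reach_trans (compls _ _ _ Hgs _ _) _.
    apply: reach_step; rewrite step_compf; exact: (compl _ _ _ Hf).
  + move=> f g xs y Hf K r; apply: reach_step; rewrite step_prec0; exact: (compl _ _ _ Hf).
  + move=> f g k xs r' y Hp Hg K r; apply: reach_step; rewrite step_precS.
    apply: reach_trans (compl _ _ _ Hp _ _) _.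
    apply: reach_step; rewrite step_precg; exact: (compl _ _ _ Hg).
  + move=> f xs y H0 Hlt K r.
    have Hs : forall z, (z < y)%N -> exists v, forall K r,
        reach (encC (FEv (enc f) (encl (z :: xs)) :: K) r) (encC K v.+1).
      by move=> z hz; case: (Hlt z hz) => v Hv; exists v; exact: (compl _ _ _ Hv).
    have Hloop : forall z, (z <= y)%N -> exists w,
        reach (encC (FEv (enc (rMin f)) (encl xs) :: K) r)
              (encC (FEv (enc f) (encl (z :: xs)) :: FMinF (enc f) z (encl xs) :: K) w).
      elim=> [|z IH] hz.
        exists r; apply: reach_step; rewrite step_min; exact: reach_refl.
      have [w Hw] := IH (ltnW hz).
      have [v Hv] := Hs z hz.
      exists v.+1; apply: reach_trans Hw _.
      apply: reach_trans (Hv _ _) _.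
      apply: reach_step; rewrite step_minS; exact: reach_refl.
    have [w Hw] := Hloop y (leqnn y).
    apply: reach_trans Hw _.
    apply: reach_trans (compl _ _ _ H0 _ _) _.
    apply: reach_step; rewrite step_min0; exact: reach_refl.
- case: H => {gs xs ys}.
  + move=> xs K r; apply: reach_step; rewrite encl_map_nil step_evs_nil; exact: reach_refl.
  + move=> g gs xs y ys Hg Hgs K r; apply: reach_step.
    rewrite [map _ _]/= encl_cons step_evs_cons.
    apply: reach_trans (compls _ _ _ Hgs _ _) _.
    apply: reach_step; rewrite step_consg.
    apply: reach_trans (compl _ _ _ Hg _ _) _.
    apply: reach_step; rewrite step_consv; exact: reach_refl.
Qed.

Definition init n := encC [:: FEv n (encl [:: n])] 0.
Definition halts n := exists k, cfst (iter k stepf (init n)) = 0.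

Lemma undec : ~ exists d, forall n, exists v, reval d [:: n] v /\ (v = 0 <-> ~ halts n).
Proof.
case=> d Hd.
pose f := rComp d [:: rProj 1]; pose cs := rMin f; pose e := enc cs.
have Hf : forall z v, reval d [:: e] v -> reval f [:: z; e] v.
  move=> z v Hv; apply: reComp Hv; constructor; last constructor.
  by constructor.
case: (Hd e) => v [Hv Hiff].
case: v Hv Hiff => [|v] Hv Hiff.
  apply: (proj1 Hiff (erefl 0)).
  have Hc : reval cs [:: e] 0 by apply: reMin => //; exact: Hf.
  have [k Hk] := compl Hc [::] 0.
  by exists k; rewrite /init Hk /encC /encK /= cfst_pair.
suff : ~ halts e by move/(proj2 Hiff).
case=> k Hk.
have Hfin : forall m, cfst (iter (m + k) stepf (init e)) = 0.
  by elim=> [|m IH] //; rewrite addSn /= step_final IH.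
have Hrun : forall z, exists t w, (z <= t)%N /\ iter t stepf (init e) =
    encC [:: FEv (enc f) (encl [:: z; e]); FMinF (enc f) z (encl [:: e])] w.
  elim=> [|z [t [w [hz ht]]]].
    by exists 1, 0; split => //; rewrite /= /init /e step_min.
  have [n Hn] := compl (Hf z v.+1 Hv) [:: FMinF (enc f) z (encl [:: e])] w.
  exists (n + t).+1, v.+1; split; first by rewrite ltnS; apply: leq_trans hz (leq_addl _ _).
  by rewrite iterS iterD ht Hn step_minS.
have [t [w [hz ht]]] := Hrun k.
have := Hfin (t - k); rewrite subnK // ht /encC /encK /= cfst_pair.
by rewrite ?encl_cons /ccons.
Qed.

Lemma ev_cat e env1 env2 : bnd e (size env1) -> ev e (env1 ++ env2) = ev e env1.
Proof.
elim: e env1 => //=.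
- by move=> i env1 hi; rewrite nth_cat hi.
- by move=> a IH env1 h; rewrite IH.
- by move=> a IH env1 h; rewrite IH.
- by move=> a IHa b IHb env1 /andP[ha hb]; rewrite IHa // IHb.
- by move=> a IHa b IHb env1 /andP[ha hb]; rewrite IHa // IHb.
- by move=> a IHa b IHb env1 /andP[ha hb]; rewrite IHa // IHb.
- by move=> c IHc a IHa b IHb env1 /and3P[hc ha hb]; rewrite IHc // IHa // IHb.
- move=> a IHa b IHb c IHc env1 /and3P[ha hb hc]; rewrite IHa // IHc //.
  by elim: (ev c env1) => //= m ->; rewrite -!cat_cons IHb.
- by move=> a IHa b IHb env1 /andP[ha hb]; rewrite IHa // -cat_cons IHb.
- by move=> a IHa b IHb env1 /andP[ha hb]; rewrite IHa // IHb.
- by move=> a IH env1 h; rewrite IH.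
- by move=> a IH env1 h; rewrite IH.
Qed.

Lemma bnd_step : bnd (step_E 1) 1. Proof. by vm_compute. Qed.

Lemma ev_step z rest : ev (step_E 1) (z :: rest) = stepf z.
Proof. by rewrite -cat1s ev_cat //; exact: bnd_step. Qed.

Opaque step_E.

Definition initE (n : E) : E := pr (cons_ (fEv n (cons_ n (cst 0))) (cst 0)) (cst 0).
Definition hE (ln lk : nat) : E :=
  ifz (fs (rec_ (initE (vr ln)) (fun _ acc => lt_ (vr acc) (fun _ _ => step_E 1)) (vr lk))) (cst 1) (cst 0).

Arguments hE : simpl never.
Definition hfun n k := if cfst (iter k stepf (init n)) is 0 then 1 else 0.

Lemma rect_ext (b : nat) (f g : nat -> nat -> nat) m :
  (forall i r, f i r = g i r) -> nat_rect (fun _ => nat) b f m = nat_rect (fun _ => nat) b g m.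
Proof. by move=> h; elim: m => //= m ->; rewrite h. Qed.

Lemma ev_hE2 n k : ev (hE 1 0 2) [:: n; k] = hfun n k.
Proof.
rewrite /hE /hfun /=.
rewrite (@rect_ext _ _ (fun _ r => stepf r)); last by move=> i r; rewrite ev_step.
by rewrite iter_rect.
Qed.

Lemma ev_hE4 j acc n k : ev (hE 1 3 4) [:: j; acc; n; k] = hfun n j.
Proof.
rewrite /hE /hfun /=.
rewrite (@rect_ext _ _ (fun _ r => stepf r)); last by move=> i r; rewrite ev_step.
by rewrite iter_rect.
Qed.

Fixpoint tcount n k := if k is k'.+1 then tcount n k' + (1 - hfun n k') else 0.

Definition tE : E := rec_ (cst 0) (fun j acc => ad (vr acc) (sb (cst 1) (hE 1 j))) (vr 0).
Definition bE : E := rec_ (cst 1) (fun _ acc => ad (vr acc) (vr acc)) (sc tE).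

Lemma ev_tE n k : ev (tE 2) [:: n; k] = tcount n k.
Proof.
change (nat_rect (fun _ => nat) 0 (fun i r => ev (EAdd (EVar 1) (ESub (cst 1 4) (hE 1 3 4))) [:: i, r, n & [:: k]]) k = tcount n k).
rewrite (@rect_ext _ _ (fun j r => r + (1 - hfun n j))).
  by elim: k => //= k ->.
move=> i r; change (r + (1 - ev (hE 1 3 4) [:: i; r; n; k]) = r + (1 - hfun n i)).
by rewrite ev_hE4.
Qed.

Lemma ev_bE n k : ev (bE 2) [:: n; k] = 2 ^ (tcount n k).+1.
Proof.
have -> : ev (bE 2) [:: n; k] = nat_rect (fun _ => nat) 1 (fun _ r => r + r) (ev (tE 2) [:: n; k]).+1 by [].
rewrite ev_tE; elim: (tcount n k).+1 => //= m ->; by rewrite expnS mul2n addnn.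
Qed.

Lemma rec2_exp (f : nat -> nat -> nat) (e : E) : bnd (e 2) 2 ->
  (forall n k, ev (e 2) [:: n; k] = f n k) -> recursive2 f.
Proof. by move=> hb H; exists (comp 2 (ds (e 2))) => n k; rewrite -H; exact: exp_reval. Qed.

Lemma rec2_h : recursive2 hfun.
Proof. apply: (@rec2_exp _ (hE 1 0)); [by vm_compute | exact: ev_hE2]. Qed.

Lemma rec2_b : recursive2 (fun n k => 2 ^ (tcount n k).+1).
Proof. apply: (@rec2_exp _ bE); [by vm_compute | exact: ev_bE]. Qed.

Lemma rec2_0 : recursive2 (fun _ _ => 0).
Proof. by exists rZero => n k; constructor. Qed.

Definition dec (flip : bool) (p q a b s : nat) :=
  let v := if ~~ odd s && (p * b < q * a)%N then 1 else 0 in if flip then 1 - v else v.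

Definition parE (x : E) : E := rec_ (cst 0) (fun _ acc => sb (cst 1) (vr acc)) x.
Definition condE p q : E :=
  ifz (parE (vr 0)) (ifz (sb (sc (ml (cst p) (vr 1))) (ml (cst q) (vr 2))) (cst 1) (cst 0)) (cst 0).
Definition decE (flip : bool) p q : E := if flip then sb (cst 1) (condE p q) else condE p q.

Lemma cst_ev n d env : ev (cst n d) env = n.
Proof. by elim: n => //= n ->. Qed.

Lemma ev_decE flip p q a b s : ev (decE flip p q 3) [:: a; b; s] = dec flip p q a b s.
Proof.
have hpar : ev (parE (vr 0) 3) [:: a; b; s] = odd s.
  rewrite /parE /=; elim: s => //= s ->; by case: (odd s).
have hc : ev (condE p q 3) [:: a; b; s] = if ~~ odd s && (p * b < q * a)%N then 1 else 0.
  rewrite /condE.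
  have -> : ev (ifz (parE (vr 0)) (ifz (sb (sc (ml (cst p) (vr 1))) (ml (cst q) (vr 2))) (cst 1) (cst 0)) (cst 0) 3) [:: a; b; s]
     = if ev (parE (vr 0) 3) [:: a; b; s] is 0 then (if (p * b).+1 - q * a is 0 then 1 else 0) else 0.
    by rewrite /= !cst_ev.
  rewrite hpar; case: (odd s) => //=.
  case: ltnP => h; first by rewrite (eqP (_ : (p * b).+1 - q * a == 0)) // subn_eq0.
  by case E: ((p * b).+1 - q * a) => [|//]; move: E h; nlia.
rewrite /decE /dec; case: flip; last exact: hc.
change (1 - ev (condE p q 3) [:: a; b; s] = 1 - (if ~~ odd s && (p * b < q * a)%N then 1 else 0)).
by rewrite hc.
Qed.

Lemma bnd_cst n d N : bnd (cst n d) N. Proof. by elim: n => //=. Qed.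

Definition two := rComp rSucc [:: rComp rSucc [:: rZero]].

Lemma decider flip p q (a b s : nat -> nat -> nat) :
  recursive2 a -> recursive2 b -> recursive2 s ->
  exists d, forall n, reval d [:: n] (dec flip p q (a n 2) (b n 2) (s n 2)).
Proof.
case=> ca Ha [cb Hb] [cs Hs].
pose arg c := rComp c [:: rProj 0; two].
have Harg : forall c (f : nat -> nat -> nat), (forall n k, reval c [:: n; k] (f n k)) ->
    forall n, reval (arg c) [:: n] (f n 2).
  move=> c f Hc n; apply: reComp (Hc n 2).
  constructor; first by constructor.
  constructor; last constructor.
  apply: reComp; last by constructor.
  constructor; last constructor.
  apply: reComp; last by constructor.
  by constructor; [constructor | constructor].
exists (rComp (comp 3 (ds (decE flip p q 3))) [:: arg ca; arg cb; arg cs]) => n.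
apply: reComp.
  constructor; first exact: (Harg _ _ Ha n).
  constructor; first exact: (Harg _ _ Hb n).
  constructor; first exact: (Harg _ _ Hs n).
  constructor.
rewrite -ev_decE; apply: exp_reval => //.
by case: flip; rewrite /decE /condE /parE /= !bnd_cst.
Qed.

Lemma hfun01 n k : hfun n k = (cfst (iter k stepf (init n)) == 0).
Proof. by rewrite /hfun; case: (cfst _). Qed.

Lemma hfun_mono n k j : (k <= j)%N -> hfun n k = 1 -> hfun n j = 1.
Proof.
move=> hkj; rewrite /hfun; case E: (cfst (iter k stepf (init n))) => [|//] _.
rewrite -(subnK hkj); suff -> : cfst (iter (j - k + k) stepf (init n)) = 0 by [].
elim: (j - k) => [|m IH]; first by rewrite add0n.
by rewrite addSn iterS step_final.
Qed.

Lemma nhalts_h n : ~ halts n -> forall k, hfun n k = 0.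
Proof. move=> nh k; rewrite hfun01; case: eqP => // h; case: nh; by exists k. Qed.

Lemma halts_T n : halts n -> exists T, forall k, hfun n k = (T <= k)%N /\ tcount n k = minn k T.
Proof.
move=> hn.
have ex : exists k, hfun n k == 1.
  by case: hn => k hk; exists k; rewrite hfun01 hk.
pose T := ex_minn ex.
have hT : forall k, hfun n k = (T <= k)%N.
  move=> k; rewrite /T; case: ex_minnP => T0 /eqP h0 hmin.
  case: (leqP T0 k) => h; first by rewrite (hfun_mono h h0).
  rewrite hfun01; case E: (_ == 0) => //.
  have : (T0 <= k)%N by apply: hmin; rewrite hfun01 E.
  by rewrite leqNgt h.
exists T => k; split; first exact: hT.
elim: k => [|k IH] /=; first by rewrite min0n.
rewrite IH hT; case: (leqP T k) => h /=.
  rewrite (minn_idPr (leqW h)); nlia.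
rewrite (minn_idPl h); nlia.
Qed.

Import Order.TTheory GRing.Theory Num.Theory.
Local Open Scope ring_scope.

Fixpoint cstc (c : nat) : rcode := if c is c'.+1 then rComp rSucc [:: cstc c'] else rZero.
Lemma cstc_ev c xs : reval (cstc c) xs c.
Proof.
elim: c => [|c IH] /=; first by constructor.
by apply: reComp; [constructor; [exact: IH|constructor] | constructor].
Qed.
Lemma rec2_const c : recursive2 (fun _ _ => c).
Proof. by exists (cstc c) => n k; exact: cstc_ev. Qed.

Section Real.
Variable R : realType.

Lemma rat_of0 (a b : nat) : rat_of R 0 a b = a%:R / b%:R.
Proof. by rewrite /rat_of expr0 mul1r. Qed.

Lemma inv2X_gt0 k : 0 < (2%:R ^+ k : R)^-1.
Proof. by rewrite invr_gt0 exprn_gt0. Qed.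

Lemma cseq_const (c : nat) : computable_seqR (fun _ => c%:R : R).
Proof.
exists (fun _ _ => c), (fun _ _ => 1%N), (fun _ _ => 0%N); split.
- exact: rec2_const.
- exact: rec2_const.
- exact: rec2_const.
- by [].
- by move=> n k; rewrite rat_of0 divr1 subrr normr0 ltW // inv2X_gt0.
Qed.

Lemma cseq_ext (x y : nat -> R) : (forall n, x n = y n) -> computable_seqR x -> computable_seqR y.
Proof. by move=> h; have -> : y = x by apply: funext => n; rewrite h. Qed.

Definition Tn n := xget 0%N [set T : nat | forall k, hfun n k = (T <= k)%N].
Definition xs n : R := if `[< halts n >] then (2%:R ^+ (Tn n).+1)^-1 else 0.

Lemma Tn_spec n : halts n -> forall k, hfun n k = (Tn n <= k)%N /\ tcount n k = minn k (Tn n).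
Proof.
move=> hn; have [T hT] := halts_T hn.
have hTn : forall k, hfun n k = (Tn n <= k)%N.
  by apply: (xgetPex 0%N (P := [set T : nat | forall k, hfun n k = (T <= k)%N])); exists T => k; case: (hT k).
have eT : Tn n = T.
  have h1 := hTn T; have h2 := hTn (Tn n); case: (hT T) => h3 _; case: (hT (Tn n)) => h4 _.
  rewrite h3 leqnn in h1; rewrite h4 leqnn in h2.
  by apply/eqP; rewrite eqn_leq; case: (Tn n <= T)%N h1 => //; case: (T <= Tn n)%N h2.
by move=> k; rewrite eT; exact: hT.
Qed.

Lemma xs_halts n : halts n -> xs n = (2%:R ^+ (Tn n).+1)^-1.
Proof. by move=> h; rewrite /xs asboolT. Qed.
Lemma xs_nhalts n : ~ halts n -> xs n = 0.
Proof. by move=> h; rewrite /xs asboolF. Qed.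

Lemma cseq_xs : computable_seqR xs.
Proof.
exists hfun, (fun n k => 2 ^ (tcount n k).+1)%N, (fun _ _ => 0%N); split.
- exact: rec2_h.
- exact: rec2_b.
- exact: rec2_const.
- by move=> n k; apply/eqP; rewrite expn_eq0.
move=> n k; rewrite rat_of0.
case: (pselect (halts n)) => hn; last first.
  by rewrite xs_nhalts // nhalts_h // mul0r subrr normr0 ltW // inv2X_gt0.
rewrite xs_halts //; case: (Tn_spec hn k) => -> ->.
case: (leqP (Tn n) k) => h /=.
  by rewrite mul1r natrX subrr normr0 ltW // inv2X_gt0.
rewrite mul0r sub0r normrN ger0_norm; last by rewrite ltW // inv2X_gt0.
rewrite lef_pV2 ?posrE ?exprn_gt0 //.
by rewrite ler_eXn2l ?ltr1n // ltnW // ltnS ltnW.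
Qed.

Lemma dec_thr (p q a b s : nat) : (0 < q)%N -> (0 < b)%N ->
  (~~ odd s && (p * b < q * a)%N) = (p%:R / q%:R < rat_of R s a b).
Proof.
move=> hq hb; rewrite /rat_of -signr_odd.
case: (odd s) => /=.
  apply/esym/negbTE; rewrite -leNgt expr1 mulN1r.
  apply: (@le_trans _ _ 0); first by rewrite oppr_le0 divr_ge0.
  by rewrite divr_ge0.
rewrite expr0 mul1r ltr_pdivrMr ?ltr0n // mulrAC ltr_pdivlMr ?ltr0n //.
by rewrite -!natrM ltr_nat [(a * q)%N]mulnC.
Qed.

Lemma no_comp (y : nat -> R) (p q : nat) (flip : bool) : (0 < q)%N ->
  (forall n, halts n -> if flip then y n <= p%:R / q%:R - 2^-1 else p%:R / q%:R + 2^-1 <= y n) ->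
  (forall n, ~ halts n -> if flip then p%:R / q%:R + 2^-1 <= y n else y n <= p%:R / q%:R - 2^-1) ->
  ~ computable_seqR y.
Proof.
move=> hq H1 H2 [a [b [s [ra rb rs bnz happ]]]].
have [d Hd] := decider flip p q ra rb rs.
apply: undec; exists d => n; exists (dec flip p q (a n 2%N) (b n 2%N) (s n 2%N)); split => //.
have hb : (0 < b n 2%N)%N by rewrite lt0n; apply/eqP.
have := happ n 2%N; rewrite ler_norml => /andP[l1 l2].
have e4 : (2%:R ^+ 2 : R)^-1 = 4^-1 by rewrite expr2 -natrM.
rewrite e4 in l1 l2.
set r := rat_of R _ _ _ in l1 l2.
set t := (p%:R / q%:R : R) in H1 H2 *.
have ht := @dec_thr p q (a n 2%N) (b n 2%N) (s n 2%N) hq hb.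
rewrite -/r -/t in ht.
rewrite /dec ht.
have hv : (2:R)^-1 = 2 * (4:R)^-1 by field.
have hu : 4 * (4:R)^-1 = 1 by field.
rewrite hv in H1 H2.
move: (4:R)^-1 hu l1 l2 H1 H2 => u hu l1 l2 H1 H2.
case: (pselect (halts n)) => hn.
  have := H1 n hn; case: (flip) => h.
    have -> : (t < r) = false by apply/negbTE; rewrite -leNgt; lra.
    by split => // h0; case: h0.
  have -> : (t < r) = true by apply/idP; lra.
  by split.
have := H2 n hn; case: (flip) => h.
  have -> : (t < r) = true by apply/idP; lra.
  by split.
have -> : (t < r) = false by apply/negbTE; rewrite -leNgt; lra.
by split.
Qed.

End Real.

Import Order.TTheory GRing.Theory Num.Theory.
Local Open Scope ring_scope.

Section Mat.
Local Open Scope sesquilinear_scope.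
Variable R : realType.
Local Notation C := (R[i]).

Definition rc (x : R) : C := Complex x 0.
Lemma rc_mul x y : rc (x * y) = rc x * rc y.
Proof. by apply/eqP; rewrite eq_complex /= !mulr0 !mul0r subr0 addr0 !eqxx. Qed.
Lemma rc0 : rc 0 = 0. Proof. by []. Qed.
Lemma rc1 : rc 1 = 1. Proof. by []. Qed.
Lemma rc_sub x y : rc (x - y) = rc x - rc y.
Proof. by apply/eqP; rewrite eq_complex /= subr0 !eqxx. Qed.
Lemma conj_rc x : (rc x)^* = rc x.
Proof. by apply/eqP; rewrite eq_complex /= oppr0 !eqxx. Qed.
Lemma Re_rc x : complex.Re (rc x) = x. Proof. by []. Qed.
Lemma Im_rc x : complex.Im (rc x) = 0. Proof. by []. Qed.
Lemma cabs2_rc x : cabs2 (rc x) = x ^+ 2.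
Proof. by rewrite /cabs2 /= expr0n addr0. Qed.
Lemma cabs20 : cabs2 (0 : C) = 0.
Proof. by rewrite /cabs2 /= expr0n addr0. Qed.

Definition Fv (b x : R) (i : nat) : C :=
  if i == 0%N then rc x else if i == 1%N then rc b else 0.

Lemma Fv_supp b x i : (2 <= i)%N -> Fv b x i = 0.
Proof. by rewrite /Fv; case: i => [|[|i]]. Qed.

Lemma FF a x b y i : Fv a x i * Fv b y i = Fv (a * b) (x * y) i.
Proof. by rewrite /Fv; case: (i == 0%N); [|case: (i == 1%N)]; rewrite ?rc_mul ?mulr0. Qed.

Lemma conjF a x i : (Fv a x i)^* = Fv a x i.
Proof. by rewrite /Fv; case: (i == 0%N); [|case: (i == 1%N)]; rewrite ?conj_rc ?conjC0. Qed.

Definition dg p q (f : nat -> C) : 'M[C]_(p, q) :=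
  \matrix_(i < p, j < q) if (i == j :> nat) then f i else 0.

Lemma dg_mul p q r f g : (forall i, (q <= i)%N -> f i = 0) ->
  dg p q f *m dg q r g = dg p r (fun i => f i * g i).
Proof.
move=> hf; apply/matrixP => i j; rewrite !mxE.
case: (ltnP i q) => hi.
  rewrite (bigD1 (Ordinal hi)) //= big1 ?addr0; last first.
    move=> k hk; rewrite !mxE; case: eqP => [e|]; last by rewrite mul0r.
    by case/eqP: hk; apply: val_inj.
  rewrite !mxE /= eqxx; by case: eqP => _; rewrite ?mulr0.
rewrite big1; first by case: eqP => // _; rewrite hf // mul0r.
move=> k _; rewrite !mxE; case: eqP => [e|]; last by rewrite mul0r.
by have := ltn_ord k; rewrite -e ltnNge hi.
Qed.

Lemma dg_ct p q f : (dg p q f)^t* = dg q p (fun i => (f i)^*).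
Proof.
apply/matrixP => i j; rewrite !mxE eq_sym.
by case: eqP => [->|]; rewrite ?conjC0.
Qed.

Lemma dg_ext p q f g : (forall i, f i = g i) -> dg p q f = dg p q g.
Proof. by move=> h; apply/matrixP => i j; rewrite !mxE h. Qed.

Lemma ct_mul p q r (A : 'M[C]_(p, q)) (B : 'M[C]_(q, r)) : (A *m B)^t* = B^t* *m A^t*.
Proof. by rewrite trmx_mul map_mxM. Qed.

Lemma pinv_uniq p q (A : 'M[C]_(p, q)) X Y : is_pinv A X -> is_pinv A Y -> X = Y.
Proof.
case=> [hX1 hX2 hX3 hX4] [hY1 hY2 hY3 hY4].
have eAX : A *m X = A *m Y.
  rewrite -[LHS]hX3 ct_mul -{1}hY1 (ct_mul (A *m Y) A) mulmxA -ct_mul hX3 hY3.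
  by rewrite mulmxA hX1.
have eXA : X *m A = Y *m A.
  rewrite -[LHS]hX4 ct_mul -{1}hY1 -mulmxA ct_mul -mulmxA -ct_mul hX4 hY4.
  by rewrite mulmxA -(mulmxA Y A X) -mulmxA hX1.
by rewrite -hX2 eXA -mulmxA eAX mulmxA hY2.
Qed.

Lemma pinv_eq p q (A : 'M[C]_(p, q)) X : is_pinv A X -> pinv A = X.
Proof.
move=> hX; apply: (@pinv_uniq _ _ A) => //.
by apply: (xgetPex 0 (P := [set X | is_pinv A X])); exists X.
Qed.

Lemma VK (z : R) : z * z^-1 * z = z.
Proof. by have [->|nz] := eqVneq z 0; rewrite ?mulr0 ?mul0r // mulfV // mul1r. Qed.

Lemma pinvF m n b x : pinv (dg m.+2 n.+2 (Fv b x)) = dg n.+2 m.+2 (Fv b^-1 x^-1).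
Proof.
apply: pinv_eq.
have sA : forall i, (n.+2 <= i)%N -> Fv b x i = 0 by move=> i hi; apply: Fv_supp; apply: leq_trans hi.
have sX : forall i, (m.+2 <= i)%N -> Fv b^-1 x^-1 i = 0 by move=> i hi; apply: Fv_supp; apply: leq_trans hi.
have eAX : dg m.+2 n.+2 (Fv b x) *m dg n.+2 m.+2 (Fv b^-1 x^-1) = dg m.+2 m.+2 (Fv (b * b^-1) (x * x^-1)).
  by rewrite dg_mul //; apply: dg_ext => i; rewrite FF.
have eXA : dg n.+2 m.+2 (Fv b^-1 x^-1) *m dg m.+2 n.+2 (Fv b x) = dg n.+2 n.+2 (Fv (b^-1 * b) (x^-1 * x)).
  by rewrite dg_mul //; apply: dg_ext => i; rewrite FF.
split.
- rewrite eAX dg_mul; last by move=> i hi; apply: Fv_supp; apply: leq_trans hi.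
  by apply: dg_ext => i; rewrite FF !VK.
- rewrite eXA dg_mul; last by move=> i hi; apply: Fv_supp; apply: leq_trans hi.
  apply: dg_ext => i; rewrite FF; congr Fv.
    by rewrite -{2}(invrK b) VK.
  by rewrite -{2}(invrK x) VK.
- by rewrite eAX dg_ct; apply: dg_ext => i; rewrite conjF.
- by rewrite eXA dg_ct; apply: dg_ext => i; rewrite conjF.
Qed.

Lemma sum2 p (h : nat -> R) : (forall i, (2 <= i)%N -> h i = 0) ->
  \sum_(i < p.+2) h i = h 0%N + h 1%N.
Proof.
move=> hh; rewrite !big_ord_recl big1 ?addr0 // => i _.
by apply: hh.
Qed.

Lemma sum_eq1 q (i : nat) (c : R) :
  \sum_(j < q) (if i == j :> nat then c else 0) = if (i < q)%N then c else 0.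
Proof.
case: ltnP => hi.
  rewrite (bigD1 (Ordinal hi)) //= eqxx big1 ?addr0 // => j hj.
  case: eqP => // e; case/eqP: hj; exact: val_inj.
apply: big1 => j _; case: eqP => // e.
by have := ltn_ord j; rewrite -e ltnNge hi.
Qed.

Lemma frob_dg p q f : (forall i, (2 <= i)%N -> f i = 0) ->
  frob (dg p.+2 q f) =
  Num.sqrt ((if (0 < q)%N then cabs2 (f 0%N) else 0) + (if (1 < q)%N then cabs2 (f 1%N) else 0)).
Proof.
move=> hf; rewrite /frob; congr Num.sqrt.
rewrite (eq_bigr (fun i : 'I_p.+2 => if (i < q)%N then cabs2 (f i) else 0)); last first.
  move=> i _; rewrite -sum_eq1; apply: eq_bigr => j _; rewrite mxE.
  by case: eqP => _; rewrite ?cabs20.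
rewrite (@sum2 p (fun i => if (i < q)%N then cabs2 (f i) else 0)) //.
by move=> i hi; rewrite hf // cabs20; case: ifP.
Qed.

Lemma norm2_col m (w : 'cV[C]_(m.+2)) : (forall i : 'I_m.+2, i != ord0 -> w i ord0 = 0) ->
  norm2 w = Num.sqrt (cabs2 (w ord0 ord0)).
Proof.
move=> hw; rewrite /norm2 /frob; congr Num.sqrt.
rewrite big_ord_recl big_ord1 big1 ?addr0 // => i _; rewrite big_ord1.
by rewrite hw ?cabs20.
Qed.

End Mat.

Import Order.TTheory GRing.Theory Num.Theory.
Local Open Scope ring_scope.

Section Items.
Local Open Scope classical_set_scope.
Variable R : realType.
Local Notation C := (R[i]).

Lemma cseqM_dg p q (b : nat) (y : nat -> R) : computable_seqR y ->
  computable_seqM (fun k => dg p q (Fv b%:R (y k))).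
Proof.
move=> hy i j; split.
- apply: (@cseq_ext R (if (i == j :> nat) then (if (i == 0%N :> nat) then y
     else if (i == 1%N :> nat) then (fun _ => b%:R) else (fun _ => 0%:R)) else (fun _ => 0%:R))).
    move=> k; rewrite mxE /Fv.
    by case: (i == j :> nat); case: (i == 0%N :> nat); case: (i == 1%N :> nat).
  by case: (i == j :> nat); case: (i == 0%N :> nat); case: (i == 1%N :> nat) => //; exact: cseq_const.
- apply: (@cseq_ext R (fun _ => 0%:R)); last exact: cseq_const.
  move=> k; rewrite mxE /Fv.
  by case: (i == j :> nat); case: (i == 0%N :> nat); case: (i == 1%N :> nat).
Qed.

Lemma cseq_A m n : computable_seqM (fun k => dg m n (Fv 0 (xs R k))).
Proof. exact: (@cseqM_dg m n 0%N _ (cseq_xs R)). Qed.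
Lemma cseq_A1 m n : computable_seqM (fun k => dg m n (Fv 1 (xs R k))).
Proof. exact: (@cseqM_dg m n 1%N _ (cseq_xs R)). Qed.
Lemma cseq_b m : computable_seqM (fun k : nat => dg m 1 (Fv 0 (1 : R))).
Proof. exact: (@cseqM_dg m 1 0%N (fun _ => (1%:R : R)) (cseq_const R 1)). Qed.

Lemma xs_facts k : (halts k -> xs R k != 0 /\ 2 <= (xs R k)^-1) /\ (~ halts k -> xs R k = 0).
Proof.
split => hk; last exact: xs_nhalts.
rewrite xs_halts // invrK invr_eq0 expf_neq0 ?pnatr_eq0 //; split => //.
by rewrite -{1}(expr1 2) ler_eXn2l ?ltr1n.
Qed.

Lemma xs_ge0 k : 0 <= xs R k.
Proof.
case: (pselect (halts k)) => hk; last by rewrite xs_nhalts.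
by rewrite xs_halts // invr_ge0 exprn_ge0.
Qed.

Lemma Av_entry m n x (v : 'cV[C]_(n.+2)) (i : 'I_m.+2) :
  (dg m.+2 n.+2 (Fv 0 x) *m v) i ord0 = if (i == 0%N :> nat) then rc x * v ord0 ord0 else 0.
Proof.
rewrite mxE; case: eqP => hi.
  rewrite (bigD1 ord0) //= big1 ?addr0.
    by rewrite mxE hi.
  move=> k hk; rewrite mxE hi; case: eqP => [e|]; last by rewrite mul0r.
  by case/eqP: hk; apply: val_inj.
apply: big1 => k _; rewrite mxE; case: eqP => e; last by rewrite mul0r.
rewrite /Fv; move/eqP/negbTE: hi => ->; case: (_ == 1%N); by rewrite ?rc0 mul0r.
Qed.

Lemma cabs2N1 : cabs2 (- 1 : C) = 1.
Proof. by rewrite /cabs2 /= sqrrN expr1n oppr0 expr0n addr0. Qed.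

Lemma lsqF m n (x : R) : lsq_res (dg m.+2 n.+2 (Fv 0 x)) (dg m.+2 1 (Fv 0 1)) = if x == 0 then 1 else 0 :> R.
Proof.
have key : forall v, norm2 (dg m.+2 n.+2 (Fv 0 x) *m v - dg m.+2 1 (Fv 0 1)) =
    Num.sqrt (cabs2 (rc x * v ord0 ord0 - 1)).
  move=> v.
  have e : forall i, (dg m.+2 n.+2 (Fv 0 x) *m v - dg m.+2 1 (Fv 0 1)) i ord0 =
      (dg m.+2 n.+2 (Fv 0 x) *m v) i ord0 - dg m.+2 1 (Fv 0 1) i ord0 by move=> i; rewrite !mxE.
  rewrite norm2_col.
    by rewrite e Av_entry mxE /= /Fv /= rc1.
  move=> i hi; rewrite e Av_entry mxE.
  have -> : (i == 0%N :> nat) = false by apply/negbTE; apply: contra hi => /eqP e0; apply/eqP/val_inj.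
  by rewrite subr0.
rewrite /lsq_res; case: eqP => hx.
  rewrite (_ : [set _ | _ in _] = [set (1:R)]) ?inf1 //.
  apply/seteqP; split => [y [v _ <-] | y ->] /=.
    by rewrite key hx rc0 mul0r sub0r cabs2N1 sqrtr1.
  by exists 0 => //; rewrite key hx rc0 mul0r sub0r cabs2N1 sqrtr1.
set S := [set _ | _ in _].
have lb : lbound S 0 by move=> y [v _ <-]; exact: sqrtr_ge0.
pose v0 := dg n.+2 1 (Fv 0 x^-1).
have S0 : S 0.
  exists v0 => //; rewrite key /v0 mxE /= /Fv /= -rc_mul mulfV; last by apply/eqP.
  by rewrite rc1 subrr cabs20 sqrtr0.
apply/eqP; rewrite eq_le; apply/andP; split.
  by apply: (ge_inf (E := S)) => //; exists 0.
by apply: lb_le_inf => //; exists 0.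
Qed.

Ltac half := let hh := fresh "hh" in assert (hh : 2 * (2:R)^-1 = 1) by (by rewrite mulfV // pnatr_eq0);
  revert hh; generalize ((2:R)^-1); intros; lra.

Lemma itemI m n : ~ BM_computable (@computable_seqM R m.+2 n.+2) (@computable_seqM R n.+2 m.+2)
      (fun A => pinv A).
Proof.
move=> H; have := H _ (@cseq_A m.+2 n.+2); move/(_ ord0 ord0) => [hre _].
apply: (@no_comp R (fun k => (xs R k)^-1) 1 1 false) => //.
- move=> k hk /=; have [_ h2] := (xs_facts k).1 hk; rewrite divr1; half.
- move=> k hk /=; rewrite (xs_facts k).2 // invr0 divr1; half.
- apply: (cseq_ext _ hre) => k /=; by rewrite pinvF mxE /= /Fv /=.
Qed.

Lemma frob_pinv0 m n (x : R) : frob (pinv (dg m.+2 n.+2 (Fv 0 x))) = `|x^-1|.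
Proof.
rewrite pinvF frob_dg; last by move=> i; apply: Fv_supp.
by rewrite /= /Fv /= invr0 rc0 cabs20 addr0 cabs2_rc sqrtr_sqr.
Qed.

Lemma itemII m n : ~ BM_computable (@computable_seqM R m.+2 n.+2) (@computable_seqR R)
      (fun A => frob (pinv A)).
Proof.
move=> H; have := H _ (@cseq_A m.+2 n.+2) => hre.
apply: (@no_comp R (fun k => (xs R k)^-1) 1 1 false) => //.
- move=> k hk /=; have [_ h2] := (xs_facts k).1 hk; rewrite divr1; half.
- move=> k hk /=; rewrite (xs_facts k).2 // invr0 divr1; half.
- apply: (cseq_ext _ hre) => k /=; by rewrite frob_pinv0 ger0_norm // invr_ge0 xs_ge0.
Qed.

Lemma itemIII m n : ~ BM_computable (@computable_seqMV R m.+2 n.+2) (@computable_seqR R)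
      (fun Ab => lsq_res Ab.1 Ab.2).
Proof.
move=> H; have := H (fun k => (dg m.+2 n.+2 (Fv 0 (xs R k)), dg m.+2 1 (Fv 0 1)))
   (conj (@cseq_A m.+2 n.+2) (@cseq_b m.+2)) => hre.
apply: (@no_comp R (fun k => if xs R k == 0 then 1 else 0) 1 2 true) => //.
- move=> k hk /=; have [h1 _] := (xs_facts k).1 hk; rewrite (negbTE h1) mul1r; half.
- move=> k hk /=; rewrite (xs_facts k).2 // eqxx mul1r; half.
- apply: (cseq_ext _ hre) => k /=; by rewrite lsqF.
Qed.

Lemma lsq_solF m n (x : R) : lsq_sol (dg m.+2 n.+2 (Fv 0 x)) (dg m.+2 1 (Fv 0 1)) = dg n.+2 1 (Fv 0 x^-1).
Proof.
rewrite /lsq_sol pinvF dg_mul; last by move=> i hi; apply: Fv_supp; apply: leq_trans hi.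
by apply: dg_ext => i; rewrite FF invr0 mulr0 mulr1.
Qed.

Lemma itemIV m n : ~ BM_computable (@computable_seqMV R m.+2 n.+2) (@computable_seqM R n.+2 1)
      (fun Ab => lsq_sol Ab.1 Ab.2).
Proof.
move=> H; have := H (fun k => (dg m.+2 n.+2 (Fv 0 (xs R k)), dg m.+2 1 (Fv 0 1)))
   (conj (@cseq_A m.+2 n.+2) (@cseq_b m.+2)); move/(_ ord0 ord0) => [hre _].
apply: (@no_comp R (fun k => (xs R k)^-1) 1 1 false) => //.
- move=> k hk /=; have [_ h2] := (xs_facts k).1 hk; rewrite divr1; half.
- move=> k hk /=; rewrite (xs_facts k).2 // invr0 divr1; half.
- apply: (cseq_ext _ hre) => k /=; by rewrite lsq_solF mxE /= /Fv /=.
Qed.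

Lemma itemV m n : ~ BM_computable (@computable_seqMV R m.+2 n.+2) (@computable_seqR R)
      (fun Ab => norm2 (lsq_sol Ab.1 Ab.2)).
Proof.
move=> H; have := H (fun k => (dg m.+2 n.+2 (Fv 0 (xs R k)), dg m.+2 1 (Fv 0 1)))
   (conj (@cseq_A m.+2 n.+2) (@cseq_b m.+2)) => hre.
apply: (@no_comp R (fun k => (xs R k)^-1) 1 1 false) => //.
- move=> k hk /=; have [_ h2] := (xs_facts k).1 hk; rewrite divr1; half.
- move=> k hk /=; rewrite (xs_facts k).2 // invr0 divr1; half.
- apply: (cseq_ext _ hre) => k /=; rewrite lsq_solF /norm2 frob_dg; last by move=> i; apply: Fv_supp.
  by rewrite /= /Fv /= addr0 cabs2_rc sqrtr_sqr ger0_norm // invr_ge0 xs_ge0.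
Qed.

Lemma frobA1 m n (x : R) : frob (dg m.+2 n.+2 (Fv 1 x)) = Num.sqrt (x ^+ 2 + 1).
Proof.
rewrite frob_dg; last by move=> i; apply: Fv_supp.
by rewrite /= /Fv /= !cabs2_rc expr1n.
Qed.

Lemma frobP1 m n (x : R) : frob (pinv (dg m.+2 n.+2 (Fv 1 x))) = Num.sqrt (x^-1 ^+ 2 + 1).
Proof. by rewrite pinvF invr1 frobA1. Qed.

Lemma itemVI m n : ~ BM_computable (@computable_seqM R m.+2 n.+2) (@computable_seqR R)
      (fun A => frob A * frob (pinv A)).
Proof.
move=> H; have := H _ (@cseq_A1 m.+2 n.+2) => hre.
apply: (@no_comp R (fun k => frob (dg m.+2 n.+2 (Fv 1 (xs R k))) * frob (pinv (dg m.+2 n.+2 (Fv 1 (xs R k))))) 3 2 false) => //.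
- move=> k hk /=; rewrite frobA1 frobP1.
  have [_ h2] := (xs_facts k).1 hk.
  have ha : 1 <= Num.sqrt (xs R k ^+ 2 + 1).
    by rewrite -[X in X <= _]sqrtr1 ler_sqrt ?lerDr ?sqr_ge0 ?addr_ge0 ?sqr_ge0.
  have hb : 2 <= Num.sqrt ((xs R k)^-1 ^+ 2 + 1).
    apply: (le_trans h2).
    rewrite -{1}(@ger0_norm _ (xs R k)^-1) ?invr_ge0 ?xs_ge0 // -sqrtr_sqr.
    by rewrite ler_sqrt ?lerDl ?addr_ge0 ?sqr_ge0.
  have hp := ler_pM ler01 (ler0n _ 2) ha hb.
  rewrite mul1r in hp.
  move: hp; generalize (Num.sqrt (xs R k ^+ 2 + 1) * Num.sqrt ((xs R k)^-1 ^+ 2 + 1)) => P hp.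
  half.
- move=> k hk /=; rewrite (xs_facts k).2 // frobA1 frobP1 invr0 expr0n add0r sqrtr1 mulr1.
  half.
Qed.

End Items.

Local Open Scope ring_scope.

Theorem theorem3p1 (R : realType) (m n : nat) (hm : (2 <= m)%N) (hn : (2 <= n)%N) :
  (* (I) A |-> A^dagger *)
  ~ BM_computable (@computable_seqM R m n) (@computable_seqM R n m)
      (fun A => pinv A) /\
  (* (II) A |-> ||A^dagger||_F *)
  ~ BM_computable (@computable_seqM R m n) (@computable_seqR R)
      (fun A => frob (pinv A)) /\
  (* (III) (A, b) |-> min_x ||A x - b||_2 *)
  ~ BM_computable (@computable_seqMV R m n) (@computable_seqR R)
      (fun Ab => lsq_res Ab.1 Ab.2) /\
  (* (IV) (A, b) |-> A^dagger b *)
  ~ BM_computable (@computable_seqMV R m n) (@computable_seqM R n 1)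
      (fun Ab => lsq_sol Ab.1 Ab.2) /\
  (* (V) (A, b) |-> ||A^dagger b||_2 *)
  ~ BM_computable (@computable_seqMV R m n) (@computable_seqR R)
      (fun Ab => norm2 (lsq_sol Ab.1 Ab.2)) /\
  (* (VI) A |-> ||A||_F ||A^dagger||_F *)
  ~ BM_computable (@computable_seqM R m n) (@computable_seqR R)
      (fun A => frob A * frob (pinv A)).
Proof.
case: m hm => [|[|m]] // _; case: n hn => [|[|n]] // _.
split; first exact: itemI.
split; first exact: itemII.
split; first exact: itemIII.
split; first exact: itemIV.
split; first exact: itemV.
exact: itemVI.
Qed.
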